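(* For every $n\in\mathbb{N}$ there exists a directed acyclic graph $D_n$ with $\operatorname{dbw}(D_n)\ge n$.
   Context: For a digraph $D$ and $X\subseteq E(D)$, $S^V_X=\{y: \exists x,z,\ \vec{xy}\in E(D)\setminus X,\ \vec{yz}\in X\}$. The directed branch-width $\operatorname{dbw}(D)$ is the minimum over pairs $(T,\beta)$ ($T$ a tree of maximum degree at most three, $\beta$ a bijection from the leaves of $T$ onto $E(D)$) of the maximum over edges $t$ of $T$ of $|S^V_{\beta(Y)}\cup S^V_{E(D)\setminus\beta(Y)}|$, where $Y$ is the set of leaves on one side of $T-t$ (width 0 if $T$ has no edges). *)

(* Defs.v *)
From mathcomp Require Import all_boot.
Set Implicit Arguments. Unset Strict Implicit. Unset Printing Implicit Defensive.

(* A (simple, finite) digraph is a finite vertex type V with an arc relation e;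
   its arc set E(D) is the set of pairs (x,y) with e x y. *)
Definition arcs (V : finType) (e : rel V) : {set V * V} := [set p | e p.1 p.2].

(* Directed acyclic: no directed cycle (in particular no loops). *)
Definition dag (V : finType) (e : rel V) : Prop :=
  forall x y, e x y -> ~~ connect e y x.

Definition SV (V : finType) (e : rel V) (X : {set V * V}) : {set V} :=
  [set y | [exists x, [exists z, ((x, y) \in arcs e :\: X) && ((y, z) \in X)]]].

Definition is_tree (T : finType) (t : rel T) : Prop :=
  [/\ 0 < #|T|, symmetric t, irreflexive t,
      (forall x y : T, connect t x y) &
      #|[set p : T * T | t p.1 p.2]| = 2 * (#|T| - 1)].

Definition deg (T : finType) (t : rel T) (x : T) : nat := #|[set y | t x y]|.

(* leaves: vertices of degree at most one (a one-vertex tree is its own leaf) *)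
Definition leaves (T : finType) (t : rel T) : {set T} := [set x | deg t x <= 1].

Definition del_edge (T : finType) (t : rel T) (u v : T) : rel T :=
  fun x y => t x y && ~~ (((x == u) && (y == v)) || ((x == v) && (y == u))).

Definition side (T : finType) (t : rel T) (u v : T) : {set T} :=
  [set l in leaves t | connect (del_edge t u v) u l].

Definition edge_width (V : finType) (e : rel V) (T : finType) (t : rel T)
    (beta : T -> V * V) (u v : T) : nat :=
  let X := beta @: side t u v in
  #|SV e X :|: SV e (arcs e :\: X)|.

(* width of (T, beta): max over tree edges (0 if T has no edges) *)
Definition decomp_width (V : finType) (e : rel V) (T : finType) (t : rel T)
    (beta : T -> V * V) : nat :=
  \max_(p : T * T | t p.1 p.2) edge_width e t beta p.1 p.2.

Definition branch_decomp (V : finType) (e : rel V) (T : finType) (t : rel T)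
    (beta : T -> V * V) : Prop :=
  [/\ is_tree t, (forall x, deg t x <= 3),
      {in leaves t &, injective beta} &
      beta @: leaves t = arcs e].

(* dbw(D) >= n : dbw is the minimum width over all directed branch
   decompositions; by convention dbw(D) = 0 when E(D) is empty (no
   decomposition exists then). *)
Definition dbw_ge (V : finType) (e : rel V) (n : nat) : Prop :=
  (arcs e = set0 -> n = 0) /\
  (forall (T : finType) (t : rel T) (beta : T -> V * V),
      branch_decomp e t beta -> n <= decomp_width e t beta).

(* Main.v *)
Require Import Defs.
From mathcomp Require Import all_boot zify.
Set Implicit Arguments. Unset Strict Implicit. Unset Printing Implicit Defensive.

Lemma conn_closed (T : finType) (r : rel T) (P : pred T) x y :
  P x -> (forall a b, connect r x a -> P a -> r a b -> P b) -> connect r x y -> P y.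
Proof.
move=> Px H /connectP [p pp ->].
suff: forall z, connect r x z -> P z -> path r z p -> P (last z p).
  by move=> /(_ x (connect0 _ _) Px pp).
elim: p {pp} => [|a p IH] z cz Pz //= /andP[rza pp].
exact: IH (connect_trans cz (connect1 rza)) (H _ _ cz Pz rza) pp.
Qed.

Lemma card_bigcup_le (I T : finType) (P : pred I) (F : I -> {set T}) :
  #|\bigcup_(i | P i) F i| <= \sum_(i | P i) #|F i|.
Proof.
elim/big_rec2: _ => [|i B n _ IH]; first by rewrite cards0.
apply: leq_trans (leq_card_setU _ _) _; exact: leq_add.
Qed.

Lemma conn_edges (T : finType) (r : rel T) : symmetric r ->
  (forall x y, connect r x y) -> forall r0 : T,
  2 * (#|T| - 1) <= #|[set p : T * T | r p.1 p.2]|.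
Proof.
move=> sr conn r0.
have Hex : forall x, exists n, [exists p : n.-tuple T, path r r0 p && (last r0 p == x)].
  move=> x; case/connectP: (conn r0 x) => p pp lp; exists (size p).
  by apply/existsP; exists (in_tuple p); rewrite /= pp -lp eqxx.
pose d x := ex_minn (Hex x).
have dP : forall x p, path r r0 p -> last r0 p = x -> d x <= size p.
  move=> x p pp lp; rewrite /d; case: ex_minnP => m _ mn; apply: mn.
  by apply/existsP; exists (in_tuple p); rewrite /= pp lp eqxx.
have dS : forall x, exists p, [/\ path r r0 p, last r0 p = x & size p = d x].
  move=> x; rewrite /d; case: ex_minnP => m /existsP[p /andP[pp /eqP lp]] _.
  by exists p; rewrite size_tuple.
have par : forall x, x != r0 -> exists y, r y x && (d y < d x).
  move=> x xr; case: (dS x) => p []; case/lastP: p => [|q z].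
    by move=> _ /= xe; rewrite xe eqxx in xr.
  rewrite rcons_path last_rcons size_rcons => /andP[pq rz] zx sz.
  subst x; exists (last r0 q); rewrite rz /= -sz ltnS; exact: dP.
pose pa x := if [pick y | r y x && (d y < d x)] is Some y then y else x.
have paP : forall x, x != r0 -> r (pa x) x && (d (pa x) < d x).
  move=> x xr; rewrite /pa; case: pickP => [y //|H].
  by case: (par x xr) => y; rewrite H.
set A := [set~ r0].
set E1 := [set (pa x, x) | x in A]; set E2 := [set (x, pa x) | x in A].
have c1 : #|E1| = #|T| - 1 by rewrite card_imset ?cardsC1 ?subn1 // => x y [].
have c2 : #|E2| = #|T| - 1 by rewrite card_imset ?cardsC1 ?subn1 // => x y [].
have dj : E1 :&: E2 = set0.
  apply/setP => p; rewrite !inE; apply/negP => /andP[/imsetP[x Ax ->] /imsetP[y Ay [e1 e2]]].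
  move: Ax Ay; rewrite !inE => /paP/andP[_ hx] /paP/andP[_ hy].
  move: hx hy; rewrite e1 -e2 => hx hy.
  by have := ltn_trans hx hy; rewrite ltnn.
have sub : E1 :|: E2 \subset [set p : T * T | r p.1 p.2].
  apply/subsetP => p /setUP[] /imsetP[x Ax ->];
  (have xr : x != r0 by move: Ax; rewrite !inE);
  have /andP[h _] := paP x xr; rewrite inE //=.
  by rewrite sr.
have := subset_leq_card sub; rewrite cardsU dj cards0 subn0 c1 c2.
by rewrite mul2n addnn.
Qed.

Section Tree.
Variables (T : finType) (t : rel T).
Hypothesis tr : is_tree t.

Lemma tsym : symmetric t. Proof. by case: tr. Qed.
Lemma tirr : irreflexive t. Proof. by case: tr. Qed.
Lemma tconn : forall x y, connect t x y. Proof. by case: tr. Qed.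

Lemma del_symm u v : symmetric (del_edge t u v).
Proof.
move=> x y; rewrite /del_edge tsym; congr (_ && ~~ _).
by rewrite orbC; congr (_ || _); apply: andbC.
Qed.

Lemma del_swap u v : del_edge t v u =2 del_edge t u v.
Proof. by move=> x y; rewrite /del_edge orbC. Qed.

Lemma tneq u v : t u v -> u != v.
Proof. by apply: contraTneq => ->; rewrite tirr. Qed.

Lemma tree_cut u v : t u v -> ~~ connect (del_edge t u v) u v.
Proof.
case: tr => T0 st irr conn cnt tuv; apply/negP => cuv.
have uv := tneq tuv.
have cd : forall x y, connect (del_edge t u v) x y.
  move=> x y; apply: connect_sub (conn x y) => a b tab.
  case dab: (del_edge t u v a b); first exact: connect1.
  move: dab; rewrite /del_edge tab /= => /negbFE/orP[] /andP[/eqP-> /eqP->] //.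
  by rewrite (sym_connect_sym (@del_symm u v)).
have := conn_edges (@del_symm u v) cd u.
set S := [set (u, v); (v, u)].
have sS : S \subset [set p : T * T | t p.1 p.2].
  by apply/subsetP => p; rewrite !inE => /orP[] /eqP-> /=; rewrite ?tuv // st.
have sub : [set p : T * T | del_edge t u v p.1 p.2] \subset [set p : T * T | t p.1 p.2] :\: S.
  apply/subsetP => p; rewrite !inE /del_edge => /andP[-> h]; rewrite andbT.
  case: p h => a b /=; by rewrite !xpair_eqE.
have := subset_leq_card sub; rewrite cardsD (setIidPr sS) cnt cards2.
have -> : (u, v) != (v, u) by rewrite xpair_eqE negb_and uv.
have : 2 <= #|T|.
  by have := max_card [set u; v]; rewrite cards2 uv.
move=> h2 h1 h3; have := leq_trans h3 h1.
move: h2; clear; lia.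
Qed.

Lemma cover u v : t u v -> leaves t \subset side t u v :|: side t v u.
Proof.
move=> tuv; apply/subsetP => l Ll; rewrite inE in Ll; rewrite !inE Ll /= (eq_connect (del_swap u v)).
apply: (conn_closed (P := fun y => connect (del_edge t u v) u y || connect (del_edge t u v) v y)) (tconn u l).
  by rewrite connect0.
move=> a b _ /orP Pa tab.
case dab: (del_edge t u v a b).
  by case: Pa => H; rewrite (connect_trans H (connect1 dab)) ?orbT.
move: dab; rewrite /del_edge tab /= => /negbFE/orP[] /andP[_ /eqP->];
by rewrite connect0 ?orbT.
Qed.

Lemma leaf_nb u v b : t u v -> u \in leaves t -> t u b -> b = v.
Proof.
move=> tuv ul tub; apply/eqP; apply/negP => /negP bv.
have : [set v; b] \subset [set y | t u y].
  by apply/subsetP => y; rewrite !inE => /orP[] /eqP->.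
move/subset_leq_card; rewrite cards2 eq_sym bv.
by move: ul; rewrite inE /deg => h1 h2; have := leq_trans h2 h1.
Qed.

Lemma leaf_side u v : t u v -> u \in leaves t -> side t u v \subset [set u].
Proof.
move=> tuv ul; apply/subsetP => l; rewrite !inE => /andP[_ cl].
apply: (conn_closed (P := pred1 u)) cl => //= a b _ /eqP-> /andP[tub].
by rewrite (leaf_nb tuv ul tub) !eqxx.
Qed.

Lemma side_split u v : t u v ->
  side t u v \subset [set u] :|: \bigcup_(w in [set y | t u y] :\ v) side t w u.
Proof.
move=> tuv; apply/subsetP => l; rewrite inE => /andP[Ll cl].
have : (l == u) || [exists w, [&& t u w, w != v & connect (del_edge t w u) w l]].
  apply: (conn_closed (P := fun y => (y == u) || [exists w, [&& t u w, w != v & connect (del_edge t w u) w y]])) cl.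
    by rewrite eqxx.
  move=> a b _ Pa dab; case bu: (b == u) => //=.
  case/orP: Pa => [/eqP au|/existsP[w /and3P[tuw wv cwa]]].
    move: dab; rewrite au /del_edge eqxx /= => /andP[tub].
    rewrite negb_or => /andP[bv _]; apply/existsP; exists b; by rewrite tub bv connect0.
  apply/existsP; exists w; rewrite tuw wv /=.
  case: (boolP (del_edge t w u a b)) => dw; first exact: connect_trans cwa (connect1 dw).
  move: dw; rewrite /del_edge (andP dab).1 /= negbK bu andbF /= => /andP[_ /eqP ->].
  exact: connect0.
case/orP => [/eqP->|/existsP[w /and3P[tuw wv cwl]]]; first by rewrite !inE eqxx.
rewrite inE; apply/orP; right; apply/bigcupP; exists w.
  by rewrite !inE wv tuw.
by rewrite inE Ll.
Qed.

Definition C u v := [set x | connect (del_edge t u v) u x].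

Lemma C_proper u v w : t u v -> t u w -> w != v -> C w u \proper C u v.
Proof.
move=> tuv tuw wv.
have cut : ~~ connect (del_edge t w u) w u by apply: tree_cut; rewrite tsym.
apply/properP; split; last first.
  by exists u; rewrite !inE ?connect0 //.
apply/subsetP => x; rewrite !inE => cx.
apply: (conn_closed (P := fun y => connect (del_edge t u v) u y)) cx.
  apply: connect1; rewrite /del_edge tuw /= eqxx /= (negbTE wv) /=.
  by rewrite (negbTE (tneq tuv)).
move=> a b cwa Pa dab.
have au : a != u by apply/eqP => au; subst a; rewrite cwa in cut.
have bu : b != u.
  by apply/eqP => bu; subst b; rewrite (connect_trans cwa (connect1 dab)) in cut.
apply: connect_trans Pa (connect1 _).
by rewrite /del_edge (andP dab).1 /= (negbTE au) (negbTE bu) /= andbF.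
Qed.

Hypothesis dg : forall x, deg t x <= 3.

Lemma cut_exists k : 0 < k -> 3 * k <= #|leaves t| ->
  exists u v, [/\ t u v, k <= #|side t u v| & #|side t u v| <= #|leaves t| - k].
Proof.
move=> k0 km; set m := #|leaves t|.
have key : forall c u v, #|C u v| <= c -> t u v -> k <= #|side t u v| ->
   exists u v, [/\ t u v, k <= #|side t u v| & #|side t u v| <= m - k].
  elim=> [|c IH] u v.
    by rewrite leqn0 => /eqP/cards0_eq/setP/(_ u); rewrite !inE connect0.
  move=> Cc tuv ks; case: (leqP #|side t u v| (m - k)) => [le|gt].
    by exists u, v.
  have uNl : u \notin leaves t.
    apply/negP => ul; have := subset_leq_card (leaf_side tuv ul).
    rewrite cards1 => h; move: gt h k0 km; rewrite -/m; clear; lia.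
  set W := [set y | t u y] :\ v.
  have Wc : #|W| <= 2.
    have := cardsD1 v [set y | t u y]; rewrite inE tuv.
    by have := dg u; rewrite /deg => h1 h2; move: h1; rewrite h2.
  case: (boolP [exists w in W, k <= #|side t w u|]) => [/exists_inP[w wW kw]|nex].
    move: wW; rewrite !inE => /andP[wv tuw].
    apply: (IH w u) => //; last by rewrite tsym.
    by have := proper_card (C_proper tuv tuw wv); move: Cc; clear; lia.
  have sW : side t u v \subset \bigcup_(w in W) side t w u.
    apply/subsetP => l ls; have := subsetP (side_split tuv) l ls.
    rewrite inE => /orP[]; last by [].
    rewrite inE => /eqP lu; move: ls; rewrite lu inE (negbTE uNl).
    by [].
  have := leq_trans (subset_leq_card sW) (card_bigcup_le _ _).
  have : \sum_(w in W) #|side t w u| <= \sum_(w in W) k.-1.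
    apply: leq_sum => w wW; move/exists_inPn: nex => /(_ w wW).
    by rewrite -ltnNge; move: k0; clear; lia.
  rewrite sum_nat_const => h1 h2; have := leq_trans h2 h1.
  have := leq_mul Wc (leqnn k.-1).
  move: gt km k0; clear; nia.
have [l1 [l2 [l1L l2L l12]]] : exists x y, [/\ x \in leaves t, y \in leaves t & x != y].
  by apply/card_gt1P; move: km k0; rewrite -/m; clear; lia.
case/connectP: (tconn l1 l2) => p; case: p => [|a p] /=.
  by move=> _ e; rewrite e eqxx in l12.
case/andP => tla _ _.
have := subset_leq_card (cover tla); rewrite -/m => hc.
have := leq_trans hc (leq_card_setU _ _) => hs.
case: (leqP k #|side t l1 a|) => h.
  exact: (key _ l1 a (leqnn _) tla h).
apply: (key _ a l1 (leqnn _)); first by rewrite tsym.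
by move: hs h km; clear; lia.
Qed.

End Tree.

Section Graph.
Variable N : nat.
Definition V := 'I_N.+2.
Definition ge : rel V := fun x y => x < y.

Lemma ge_dag : dag ge.
Proof.
move=> x y exy; apply/negP => c.
have : y <= x.
  apply: (conn_closed (P := fun a : V => y <= a)) c => // a b _ ya ab.
  exact: leq_trans ya (ltnW ab).
by rewrite leqNgt; apply/negP; rewrite negbK; exact: exy.
Qed.

Lemma arcs_big : N.+1 <= #|arcs ge|.
Proof.
pose g (j : 'I_N.+1) : V * V := (ord0, lift ord0 j).
have gi : injective g by move=> i j /(congr1 snd) /= h; exact: lift_inj h.

have e : #|g @: [set: 'I_N.+1]| = N.+1 by rewrite card_imset // cardsT card_ord.
rewrite -[X in X <= _]e.
apply: subset_leq_card; apply/subsetP => p /imsetP[j _ ->].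
by rewrite inE /= /ge lift0.
Qed.

Variable X : {set V * V}.
Let Mx := SV ge X :|: SV ge (arcs ge :\: X).

Lemma nm y x z : y \notin Mx -> ge x y -> ge y z -> ((x, y) \in X) = ((y, z) \in X).
Proof.
rewrite /Mx !inE negb_or => /andP[n1 n2] xy yz.
case ex: ((x, y) \in X); case ez: ((y, z) \in X) => //.
  case/negP: n2; apply/existsP; exists x; apply/existsP; exists z.
  by rewrite !inE /= ex ez xy yz.
case/negP: n1; apply/existsP; exists x; apply/existsP; exists z.
by rewrite !inE /= ex ez xy.
Qed.

Lemma graph_lemma : #|Mx| < N ->
  #|arcs ge :&: X| <= (#|Mx| + 2) ^ 2 \/ #|arcs ge :\: X| <= (#|Mx| + 2) ^ 2.
Proof.
move=> MN.
have [i iM] : exists i : 'I_N, (inord i.+1 : V) \notin Mx.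
  case: (boolP [exists i : 'I_N, (inord i.+1 : V) \notin Mx]) => [/existsP//|].
  rewrite negb_exists => /forallP H.
  have sub : [set (inord i.+1 : V) | i : 'I_N] \subset Mx.
    by apply/subsetP => y /imsetP[i _ ->]; have := H i; rewrite negbK.
  have := subset_leq_card sub; rewrite card_imset ?cardsT ?card_ord.
    by rewrite leqNgt MN.
  move=> a b /(congr1 (@nat_of_ord _)); rewrite !inordK ?ltnS ?(ltnW (ltn_ord _)) //.
  by move=> [] /val_inj.
set c : V := inord i.+1.
have cv : (c : nat) = i.+1 by rewrite /c inordK //; have := ltn_ord i; lia.
set B := Mx :|: [set ord0; ord_max].
have Bc : #|B| <= #|Mx| + 2.
  apply: leq_trans (leq_card_setU _ _) _; rewrite leq_add2l cards2.
  by case: (_ != _).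
have notB : forall y : V, y \notin B -> [/\ 0 < y, y < N.+1 & y \notin Mx].
  move=> y; rewrite !inE !negb_or => /and3P[yM y0 ym]; split => //.
    by rewrite lt0n; apply: contra y0 => /eqP h; apply/eqP/val_inj.
  have := ltn_ord y; rewrite ltnS leq_eqVlt => /orP[/eqP h|//].
  have e : y = ord_max by apply/val_inj.
  by rewrite e eqxx in ym.
have cB : c \notin B.
  rewrite in_setU negb_or iM /= !inE negb_or.
  apply/andP; split; apply/eqP => e; move: (congr1 (@nat_of_ord _) e); rewrite cv /=.
    by [].
  move=> e'; have := ltn_ord i; move: e'; clear; lia.
set col := fun y : V => ((ord0, y) \in X).
have inc : forall y z : V, y \notin B -> ge y z -> ((y, z) \in X) = col y.
  move=> y z /notB[y0 yN yM] yz; rewrite /col (nm yM _ yz) //.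
have ind : forall x y : V, y \notin B -> ge x y -> ((x, y) \in X) = col y.
  move=> x y /notB[y0 yN yM] xy; rewrite /col.
  by rewrite (nm yM xy (z := ord_max)) // (nm yM (x := ord0) (z := ord_max)).
have ceq : forall y1 y2 : V, y1 \notin B -> y2 \notin B -> col y1 = col y2.
  move=> y1 y2 h1 h2; case: (ltngtP y1 y2) => h.
  - by rewrite -(inc _ _ h1 h) (ind _ _ h2 h).
  - by rewrite -(inc _ _ h2 h) (ind _ _ h1 h).
  - by have -> : y1 = y2 by apply/val_inj.
have claim : forall p, p \in arcs ge -> (p \in X) != col c -> p \in setX B B.
  case=> a b; rewrite inE /= => ab ne; rewrite inE /=.
  apply/andP; split; apply/negPn/negP => h; move: ne.
    by rewrite (inc _ _ h ab) (ceq _ _ h cB) eqxx.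
  by rewrite (ind _ _ h ab) (ceq _ _ h cB) eqxx.
have bnd : forall S : {set V * V}, S \subset setX B B -> #|S| <= (#|Mx| + 2) ^ 2.
  move=> S /subset_leq_card; rewrite cardsX => h; apply: leq_trans h _.
  by rewrite expnS expn1 leq_mul.
case cc: (col c); [right|left]; apply: bnd; apply/subsetP => p.
  by rewrite in_setD => /andP[pX pa]; apply: claim => //; rewrite (negbTE pX) cc.
by rewrite in_setI => /andP[pa pX]; apply: claim => //; rewrite pX cc.
Qed.

End Graph.

Theorem mainTheorem14 : forall n : nat,
  exists (V : finType) (e : rel V), dag e /\ dbw_ge e n.
Proof.
move=> n; set k := (n + 1) ^ 2 + 1.
exists (V (3 * k)), (@ge (3 * k)); split; first exact: ge_dag.
split.
  move=> h; have : ((ord0 : V (3 * k)), (ord_max : V (3 * k))) \in arcs (@ge (3 * k)).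
    by rewrite inE /ge /=.
  by rewrite h inE.
move=> T t beta [tr dg inj img].
have mE : #|leaves t| = #|arcs (@ge (3 * k))| by rewrite -img card_in_imset.
have mb := arcs_big (3 * k).
have k0 : 0 < k by rewrite /k addn1.
have km : 3 * k <= #|leaves t| by rewrite mE; exact: ltnW.
have [u [v [tuv ks sk]]] := cut_exists tr dg k0 km.
apply: leq_trans (leq_bigmax_cond (u, v) tuv); rewrite /edge_width /=.
set X := beta @: side t u v.
have sL : side t u v \subset leaves t by apply/subsetP => l; rewrite inE => /andP[].
have sX : X \subset arcs (@ge (3 * k)) by rewrite -img; apply: imsetS.
have cX : #|X| = #|side t u v|.
  by rewrite card_in_imset //; apply: sub_in2 inj => x; apply: (subsetP sL).
rewrite leqNgt; apply/negP => lt.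
have := @graph_lemma (3 * k) X.
set w := #|_ :|: _|.
have wN : w < 3 * k by apply: leq_trans lt _; rewrite /k; nia.
have hw : (w + 2) ^ 2 <= (n + 1) ^ 2 by rewrite leq_exp2r // addn2 addn1 ltnS.
case/(_ wN) => h.
  move: h; rewrite (setIidPr sX) cX => h.
  move: hw ks h; rewrite /k; clear; lia.
move: h; rewrite cardsD (setIidPr sX) cX -mE => h.
move: hw sk ks km h k0; rewrite /k; clear; lia.
Qed.
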